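(* Let $\alpha\in(0,1)$, let $0=t_0<t_1<\cdots$ be arbitrary time levels with $\tau_k=t_k-t_{k-1}$, and let $n\ge2$. Then (i) $a^{(n)}_{n-k-1}-a^{(n)}_{n-k}=I^{(n)}_{n-k-1}+J^{(n)}_{n-k}$ for $1\le k\le n-1$; (ii) $\frac{2(1-\alpha)}{2-\alpha}a^{(n)}_0-a^{(n)}_1=\frac{\alpha}{2-\alpha}\omega_{1-\alpha}(\tau_n)+J^{(n)}_1$.
   Context: $\omega_\beta(t):=t^{\beta-1}/\Gamma(\beta)$ for $t>0$ and $\beta\notin\{0,-1,-2,\dots\}$ (so $\omega_{-\alpha}(t)=t^{-\alpha-1}/\Gamma(-\alpha)$). $a^{(n)}_{n-k}:=\frac1{\tau_k}\int_{t_{k-1}}^{t_k}\omega_{1-\alpha}(t_n-s)\,ds$ for $1\le k\le n$; $I^{(n)}_{n-k}:=\int_{t_{k-1}}^{t_k}\frac{t-t_k}{\tau_k}\omega_{-\alpha}(t_n-t)\,dt$ for $1\le k\le n$; $J^{(n)}_{n-k}:=\int_{t_{k-1}}^{t_k}\frac{t_{k-1}-t}{\tau_k}\omega_{-\alpha}(t_n-t)\,dt$ for $1\le k\le n-1$. *)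

(* Defs.v *)
(* R : realType, Lebesgue integrals (needed since the
   kernels omega_{1-alpha}, omega_{-alpha} are unbounded near t_n). *)
From HB Require Import structures.
From mathcomp Require Import all_boot all_order all_algebra.
From mathcomp Require Import all_classical all_reals all_analysis.
Set Implicit Arguments. Unset Strict Implicit. Unset Printing Implicit Defensive.
Import Order.TTheory GRing.Theory Num.Theory.
Import numFieldNormedType.Exports.
Local Open Scope classical_set_scope.
Local Open Scope ring_scope.

Section Defs.
Variable R : realType.

Definition Gamma_pos (x : R) : R :=
  Rintegral lebesgue_measure `]0%R, +oo[ (fun s : R => s `^ (x - 1) * expR (- s)).

(* Analytic continuation to x not in {0,-1,-2,...}:
   Gamma x = Gamma(x+N) / (x (x+1) ... (x+N-1)) with N large enough that x+N > 0. *)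
Definition Gamma (x : R) : R :=
  let N := if 0 < x then 0%N else (Num.truncn (- x)).+1 in
  Gamma_pos (x + N%:R) / \prod_(i < N) (x + i%:R).

Definition omega (beta s : R) : R := s `^ (beta - 1) / Gamma beta.

Definition tau (t : nat -> R) (k : nat) : R := t k - t k.-1.

(* Coefficients indexed as in the paper: subscript j = n - k, i.e. k = n - j. *)
Definition acoef (alpha : R) (t : nat -> R) (n j : nat) : R :=
  let k := (n - j)%N in
  (tau t k)^-1 * Rintegral lebesgue_measure `[t k.-1, t k]
                   (fun s => omega (1 - alpha) (t n - s)).

Definition Icoef (alpha : R) (t : nat -> R) (n j : nat) : R :=
  let k := (n - j)%N in
  Rintegral lebesgue_measure `[t k.-1, t k]
    (fun s => (s - t k) / tau t k * omega (- alpha) (t n - s)).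

Definition Jcoef (alpha : R) (t : nat -> R) (n j : nat) : R :=
  let k := (n - j)%N in
  Rintegral lebesgue_measure `[t k.-1, t k]
    (fun s => (t k.-1 - s) / tau t k * omega (- alpha) (t n - s)).

End Defs.

(* Main.v *)
Require Import Defs.
From HB Require Import structures.
From mathcomp Require Import all_boot all_order all_algebra.
From mathcomp Require Import all_classical all_reals all_analysis.
From mathcomp Require Import ring lra zify measurable_realfun.
Import Order.TTheory GRing.Theory Num.Theory.
Local Open Scope ring_scope.

Module Helpers.
Set Implicit Arguments. Unset Strict Implicit. Unset Printing Implicit Defensive.
Import numFieldNormedType.Exports.
Local Open Scope classical_set_scope.
Local Open Scope ring_scope.

Section S.
Variable R : realType.
Local Notation mu := (@lebesgue_measure R).

Lemma is_derive_dpow (d r x : R) : x < d ->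
  is_derive x 1 (fun s => (d - s) `^ r) (r * (d - x) `^ (r - 1) * (-1)).
Proof.
move=> xd.
have -> : (fun s => (d - s) `^ r) = (@powR R ^~ r) \o (fun s => d - s) by [].
apply: is_derive1_comp.
  by apply: is_derive1_powR; rewrite subr_gt0.
have -> : (fun s : R => d - s) = cst d - id by apply/funext => s.
have -> : (-1 : R) = 0 - 1 by rewrite sub0r.
exact: is_deriveB.
Qed.

Lemma cont_dpow (d r x : R) : x < d -> {for x, continuous (fun s => (d - s) `^ r)}.
Proof.
move=> xd; have [h _] := is_derive_dpow r xd.
by apply: differentiable_continuous; apply/derivable1_diffP.
Qed.

Lemma within_dpow (c e d r : R) : e < d ->
  {within `[c, e], continuous (fun s => (d - s) `^ r)}.
Proof.
move=> ed; apply: continuous_in_subspaceT => x; rewrite inE /= in_itv /= => /andP[_ xe].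
by apply: cont_dpow; apply: le_lt_trans ed.
Qed.

Lemma integrable_dpow (c e d r : R) : e < d ->
  mu.-integrable `[c, e] (EFin \o (fun s => (d - s) `^ r)).
Proof.
move=> ed; apply: continuous_compact_integrable; first exact: segment_compact.
exact: within_dpow.
Qed.

Lemma int_dpow (c e d p : R) : c < e -> e < d -> p + 1 != 0 ->
  (\int[mu]_(x in `[c, e]) ((d - x) `^ p)%:E =
  (((d - c) `^ (p+1) - (d - e) `^ (p+1)) / (p+1))%:E)%E.
Proof.
move=> ce ed p1.
pose F := fun s : R => - ((d - s) `^ (p+1)) / (p+1).
have dF x : x < d -> is_derive x 1 F ((d - x) `^ p).
  move=> xd.
  have -> : F = (- (p+1)^-1) \*: (fun s => (d - s) `^ (p+1)).
    apply/funext => s; rewrite /F /=.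
    change (- (d - s) `^ (p + 1) / (p + 1) = - (p + 1)^-1 * (d - s) `^ (p + 1)).
    by rewrite mulNr mulrC mulNr.
  have h := is_deriveZ (- (p+1)^-1) (is_derive_dpow (p+1) xd).
  apply: (is_derive_eq h); rewrite addrK.
  change (- (p+1)^-1 * ((p+1) * (d-x)`^p * -1) = (d-x)`^p).
  by field.
rewrite (@continuous_FTC2 _ _ F) //.
- by rewrite /F -EFinB; congr (_%:E); rewrite !mulNr opprK addrC mulrBl.
- exact: within_dpow.
- split.
  + by move=> x; rewrite in_itv /= => /andP[_ xe]; have [] := dF x (lt_trans xe ed).
  + apply: cvg_at_right_filter.
    have [h _] := dF c (lt_trans ce ed).
    exact/differentiable_continuous/derivable1_diffP.
  + apply: cvg_at_left_filter.
    have [h _] := dF e ed.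
    exact/differentiable_continuous/derivable1_diffP.
- move=> x; rewrite in_itv /= => /andP[_ xe].
  by have [_ <-] := dF x (lt_trans xe ed); rewrite derive1E.
Qed.

Lemma mfun_dpow (D : set R) (d r : R) : measurable_fun D (fun s => (d - s) `^ r).
Proof.
apply: measurable_funTS.
apply: (@measurableT_comp _ _ _ _ _ _ (@powR R ^~ r)); first exact: measurable_powR.
apply: measurable_funB => //.
Qed.

Lemma cvg_u (h : R) : (fun m : nat => h * (m.+2%:R)^-1) @ \oo --> 0.
Proof.
have -> : (0:R) = h * 0 by rewrite mulr0.
apply: cvgMr.
have := @cvg_harmonic R; rewrite -cvg_shiftS.
by apply: cvg_trans; apply: near_eq_cvg; near=> m.
Unshelve. all: by end_near.
Qed.


Lemma int_dpow_sing (c d p : R) : c < d -> -1 < p < 0 ->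
  (\int[mu]_(x in `[c, d]) ((d - x) `^ p)%:E = (((d - c) `^ (p+1)) / (p+1))%:E)%E.
Proof.
move=> cd /andP[p1 p0].
have p1' : 0 < p + 1 by rewrite -(opprK 1) subr_gt0.
set f := fun x => (d - x) `^ p.
pose u m : R := (d - c) * (m.+2%:R)^-1.
pose e m : R := d - u m.
have u0 m : 0 < u m by rewrite mulr_gt0 // ?subr_gt0 // invr_gt0.
have u1 m : u m < d - c.
  rewrite /u -[ltRHS]mulr1 ltr_pM2l ?subr_gt0 // invf_lt1 // ltr1n //.
have ce m : c < e m by rewrite /e ltrBrDl -ltrBrDr.
have ed m : e m < d by rewrite /e ltrBlDl ltrDr.
have nde : {homo e : m n / (m <= n)%N >-> m <= n}.
  move=> m n mn; rewrite /e; apply: lerB => //; rewrite /u ler_pM2l ?subr_gt0 //.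
  by rewrite lef_pV2 ?posrE // ler_nat.
pose g m := (EFin \o f) \_ `[c, e m]%classic.
have gE m : (\int[mu]_(x in `[c, d]) g m x = (((d - c) `^ (p+1) - (u m) `^ (p+1)) / (p+1))%:E)%E.
  rewrite /g -integral_mkcondr.
  have -> : `[c, d] `&` `[c, e m] = `[c, e m]%classic.
    by apply: setIidr; apply: subset_itvl; rewrite bnd_simp ltW.
  rewrite int_dpow //; last by rewrite gt_eqF.
  by rewrite /e (_ : d - (d - u m) = u m) //; lra.
have mg m : measurable_fun `[c, d] (g m).
  apply: measurable_funTS; apply/(measurable_restrictT _ _).1 => //.
  by apply/measurable_EFinP; exact: mfun_dpow.
have g0 m x : `[c, d]%classic x -> (0 <= g m x)%E.
  by move=> _; rewrite /g /patch; case: ifP => // _; rewrite lee_fin powR_ge0.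
have ndg x : `[c, d]%classic x -> {homo (fun m => g m x) : m n / (m <= n)%N >-> (m <= n)%E}.
  move=> _ m n mn; rewrite /g /patch; case: ifPn => xm.
    have -> // : x \in `[c, e n]%classic.
    move: xm; rewrite !inE /= !in_itv /= => /andP[-> xm] /=.
    exact: le_trans xm (nde _ _ mn).
  by case: ifP => // _; rewrite lee_fin powR_ge0.
have mono := @cvg_monotone_convergence _ _ R mu `[c, d]%classic (measurable_itv _) g mg g0 ndg.
have ucvg : u m @[m --> \oo] --> 0 by exact: cvg_u.
have limg x : `[c, d]%classic x -> limn (g^~ x) = (f x)%:E.
  rewrite /= in_itv /= => /andP[cx]; rewrite le_eqVlt => /predU1P[->|xd].
    rewrite /f subrr powR0 ?lt_eqF //.
    apply: cvg_lim => //; apply: cvg_near_cst; apply: nearW => m.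
    rewrite /g /patch ifF //; apply/negbTE; apply/negP; rewrite inE /= in_itv /= => /andP[_].
    by rewrite leNgt ed.
  apply: cvg_lim => //; apply: cvg_near_cst.
  have : \forall m \near \oo, x < e m.
    have ecvg : e m @[m --> \oo] --> d.
      have h := @cvgB _ _ nat \oo _ (fun=> d) u d 0 (cvg_cst d) ucvg.
      by rewrite subr0 in h; apply: h.
    exact: (cvgr_gt _ ecvg _ xd).
  apply: filterS => m xm.
  by rewrite /g /patch ifT // inE /= in_itv /= cx ltW.
have -> : (\int[mu]_(x in `[c, d]) ((d - x) `^ p)%:E = 
    \int[mu]_(x in `[c, d]) limn (g^~ x))%E.
  by apply: eq_integral => x /[1!inE] /limg ->.
suff h2 : (\int[mu]_(x in `[c,d]) g n x)%E @[n --> \oo] --> (((d-c)`^(p+1)/(p+1))%:E).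
  exact: (cvg_unique _ mono h2).
under eq_cvg do rewrite gE.
apply: cvg_EFin; first exact: nearW.
rewrite /comp /=.
have -> : (d - c) `^ (p + 1) / (p + 1) = ((d - c) `^ (p + 1) - 0) / (p + 1) by rewrite subr0.
apply: cvgMl; apply: cvgB; first exact: cvg_cst.
have := (cvg_at_rightP (fun a => a `^ (p+1)) 0 0).1 (powR_cvg0 p1').
by apply; split.
Qed.


Lemma Rint_dpow (c e d p : R) : c < e -> e < d -> p + 1 != 0 ->
  \int[mu]_(x in `[c, e]) (d - x) `^ p =
  ((d - c) `^ (p+1) - (d - e) `^ (p+1)) / (p+1).
Proof. by move=> ce ed p1; rewrite /Rintegral int_dpow. Qed.

Lemma Rint_dpow_sing (c d p : R) : c < d -> -1 < p < 0 ->
  \int[mu]_(x in `[c, d]) (d - x) `^ p = (d - c) `^ (p+1) / (p+1).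
Proof. by move=> cd hp; rewrite /Rintegral int_dpow_sing. Qed.

Lemma integrable_dpow_sing (c d p : R) : c < d -> -1 < p < 0 ->
  mu.-integrable `[c, d] (EFin \o (fun s => (d - s) `^ p)).
Proof.
move=> cd hp; apply/integrableP; split.
  by apply/measurable_EFinP; exact: mfun_dpow.
have -> : (\int[mu]_(x in `[c, d]) `|(EFin \o (fun s : R => ((d - s) `^ p)%R)) x| =
   \int[mu]_(x in `[c, d]) ((d - x) `^ p)%:E)%E.
  by apply: eq_integral => x _ /=; rewrite ger0_norm // powR_ge0.
by rewrite int_dpow_sing // ltry. Qed.

Lemma Rint_lin (a b : R) (f1 f2 : R -> R) (u v : R) :
  mu.-integrable `[a, b] (EFin \o f1) -> mu.-integrable `[a, b] (EFin \o f2) ->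
  \int[mu]_(x in `[a, b]) (u * f1 x + v * f2 x) =
  u * \int[mu]_(x in `[a, b]) f1 x + v * \int[mu]_(x in `[a, b]) f2 x.
Proof.
move=> i1 i2.
rewrite RintegralD //; first by rewrite !RintegralZl.
  have h : mu.-integrable `[a, b] (fun x => u%:E * (EFin \o f1) x)%E by apply: integrableZl.
  by apply: eq_integrable h => // x _; rewrite /= EFinM.
have h : mu.-integrable `[a, b] (fun x => v%:E * (EFin \o f2) x)%E by apply: integrableZl.
by apply: eq_integrable h => // x _; rewrite /= EFinM.
Qed.


Lemma omega1E (al x : R) : 0 < al < 1 ->
  omega (1 - al) x = x `^ (- al) * (Gamma_pos (1 - al))^-1.
Proof.
move=> /andP[a0 a1].
rewrite /omega /Gamma ifT ?subr_gt0 // big_ord0 divr1 addr0.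
by rewrite (_ : 1 - al - 1 = - al) //; ring.
Qed.

Lemma omega0E (al x : R) : 0 < al < 1 ->
  omega (- al) x = - al * x `^ (- al - 1) * (Gamma_pos (1 - al))^-1.
Proof.
move=> /andP[a0 a1].
rewrite /omega /Gamma ifF; last by apply/negbTE; rewrite -leNgt oppr_le0 ltW.
rewrite opprK.
have -> : Num.truncn al = 0%N by apply/truncn0Pn; rewrite -ltNge.
rewrite big_ord1 /= addr0 (_ : - al + 1 = 1 - al); last by rewrite addrC.
rewrite invf_div; ring.
Qed.


Lemma powRS (x r : R) : 0 <= x -> r + 1 != 0 -> x `^ (r + 1) = x * x `^ r.
Proof.
rewrite le_eqVlt => /predU1P[<-|x0] r1.
  by rewrite powR0 // mul0r.
rewrite powRD; last by rewrite (gt_eqF x0) implybT.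
by rewrite powRr1 ?ltW // mulrC.
Qed.

Lemma powRm1 (x al : R) : 0 <= x -> 0 < al -> x * x `^ (- al - 1) = x `^ (- al).
Proof.
move=> x0 a0; rewrite -powRS //; first by rewrite subrK.
by rewrite subrK oppr_eq0 gt_eqF.
Qed.

Section coefs.
Variable al : R.
Hypothesis hal : 0 < al < 1.
Let K := (Gamma_pos (1 - al))^-1.
Let P x := x `^ (- al).
Let a0 : 0 < al. Proof. by case/andP: hal. Qed.
Let a1 : al < 1. Proof. by case/andP: hal. Qed.
Let e1 : - al + 1 != 0. Proof. by rewrite addrC subr_eq0 gt_eqF. Qed.
Let e2 : - al - 1 + 1 != 0. Proof. by rewrite subrK oppr_eq0 gt_eqF. Qed.

Lemma Ra (a b d : R) : a < b -> b < d ->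
  \int[mu]_(s in `[a, b]) omega (1 - al) (d - s) =
  K * ((d - a) * P (d - a) - (d - b) * P (d - b)) / (1 - al).
Proof.
move=> ab bd.
under eq_Rintegral do rewrite omega1E //.
rewrite RintegralZr //; last exact: integrable_dpow.
rewrite Rint_dpow // !powRS ?subr_ge0 ?ltW ?(lt_trans ab) //.
by rewrite /K /P (_ : - al + 1 = 1 - al) 1?addrC //; ring.
Qed.

Lemma Ra_sing (a d : R) : a < d ->
  \int[mu]_(s in `[a, d]) omega (1 - al) (d - s) =
  K * ((d - a) * P (d - a)) / (1 - al).
Proof.
move=> ad.
under eq_Rintegral do rewrite omega1E //.
rewrite RintegralZr //; last by apply: integrable_dpow_sing => //; rewrite ltrNl opprK a1 oppr_lt0 a0.
rewrite Rint_dpow_sing //; last by rewrite ltrNl opprK a1 oppr_lt0 a0.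
rewrite powRS ?subr_ge0 ?ltW //.
by rewrite /K /P (_ : - al + 1 = 1 - al) 1?addrC //; ring.
Qed.

Lemma RJ (a b d : R) : a < b -> b < d ->
  \int[mu]_(s in `[a, b]) ((a - s) / (b - a) * omega (- al) (d - s)) =
  (- al * K / (b - a)) * (((d - a) * P (d - a) - (d - b) * P (d - b)) / (1 - al))
  + (al * K * (d - a) / (b - a)) * ((P (d - a) - P (d - b)) / (- al)).
Proof.
move=> ab bd.
transitivity (\int[mu]_(s in `[a, b]) ((- al * K / (b - a)) * (d - s) `^ (- al)
   + (al * K * (d - a) / (b - a)) * (d - s) `^ (- al - 1))).
  apply: eq_Rintegral => s; rewrite inE /= in_itv /= => /andP[_ sb].
  rewrite omega0E // -(powRm1 (x := d - s)) ?subr_ge0 ?(ltW (le_lt_trans sb bd)) //.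
  rewrite /K; ring.
rewrite Rint_lin; try exact: integrable_dpow.
rewrite !Rint_dpow // subrK.
rewrite !powRS ?subr_ge0 ?ltW ?(lt_trans ab) //.
by rewrite /P (_ : - al + 1 = 1 - al) 1?addrC.
Qed.

Lemma RI (a b d : R) : a < b -> b <= d ->
  \int[mu]_(s in `[a, b]) ((s - b) / (b - a) * omega (- al) (d - s)) =
  (al * K / (b - a)) * (((d - a) * P (d - a) - (d - b) * P (d - b)) / (1 - al))
  - (al * K * (d - b) / (b - a)) * ((P (d - a) - P (d - b)) / (- al)).
Proof.
move=> ab; rewrite le_eqVlt => /predU1P[<-{d}|bd].
  transitivity (\int[mu]_(s in `[a, b]) ((al * K / (b - a)) * (b - s) `^ (- al))).
    apply: eq_Rintegral => s; rewrite inE /= in_itv /= => /andP[_ sb].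
    rewrite omega0E // -(powRm1 (x := b - s)) ?subr_ge0 //.
    rewrite /K; ring.
  rewrite RintegralZl //; last by apply: integrable_dpow_sing => //; rewrite ltrNl opprK a1 oppr_lt0 a0.
  rewrite Rint_dpow_sing //; last by rewrite ltrNl opprK a1 oppr_lt0 a0.
  rewrite powRS ?subr_ge0 ?ltW // subrr /P powR0 ?oppr_eq0 ?gt_eqF //.
  by rewrite (_ : - al + 1 = 1 - al) 1?addrC //; ring.
transitivity (\int[mu]_(s in `[a, b]) ((al * K / (b - a)) * (d - s) `^ (- al)
   + (- al * K * (d - b) / (b - a)) * (d - s) `^ (- al - 1))).
  apply: eq_Rintegral => s; rewrite inE /= in_itv /= => /andP[_ sb].
  rewrite omega0E // -(powRm1 (x := d - s)) ?subr_ge0 ?(ltW (le_lt_trans sb bd)) //.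
  rewrite /K; ring.
rewrite Rint_lin; try exact: integrable_dpow.
rewrite !Rint_dpow // subrK.
rewrite !powRS ?subr_ge0 ?ltW ?(lt_trans ab) //.
rewrite /P (_ : - al + 1 = 1 - al) 1?addrC //.
ring.
Qed.

End coefs.

End S.

End Helpers.
Import Helpers.

Theorem lemma4p1 (R : realType) (alpha : R) (t : nat -> R) (n : nat) :
  0 < alpha < 1 ->
  t 0%N = 0 ->
  (forall k : nat, t k < t k.+1) ->
  (2 <= n)%N ->
  (forall k : nat, (1 <= k <= n - 1)%N ->
     acoef alpha t n (n - k - 1) - acoef alpha t n (n - k)
     = Icoef alpha t n (n - k - 1) + Jcoef alpha t n (n - k))
  /\
  (2 * (1 - alpha) / (2 - alpha) * acoef alpha t n 0 - acoef alpha t n 1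
     = alpha / (2 - alpha) * omega (1 - alpha) (tau t n) + Jcoef alpha t n 1).
Proof.
move=> hal t0 tinc n2.
have a0 : 0 < alpha by case/andP: hal.
have a1 : alpha < 1 by case/andP: hal.
have tlt i j : (i < j)%N -> t i < t j.
  elim: j => // j IH; rewrite ltnS leq_eqVlt => /predU1P[->|/IH h].
    exact: tinc.
  exact: lt_trans h (tinc j).
have tle i j : (i <= j)%N -> t i <= t j.
  rewrite leq_eqVlt => /predU1P[->//|/tlt/ltW//].
have al0 : alpha != 0 by rewrite gt_eqF.
have al1 : 1 - alpha != 0 by rewrite subr_eq0 eq_sym lt_eqF.
have al2 : 2 - alpha != 0 by rewrite subr_eq0 eq_sym lt_eqF // (lt_trans a1) // ltr1n.
split.
- move=> k /andP[k1 kn].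
  rewrite /acoef /Icoef /Jcoef /tau.
  have -> : (n - (n - k - 1))%N = k.+1 by lia.
  have -> : (n - (n - k))%N = k by lia.
  rewrite /=.
  have t1 : t k.-1 < t k by apply: tlt; lia.
  have t2 : t k < t k.+1 by apply: tinc.
  have t3 : t k < t n by apply: tlt; lia.
  have n1 : t k - t k.-1 != 0 by rewrite subr_eq0 gt_eqF.
  have n2' : t k.+1 - t k != 0 by rewrite subr_eq0 gt_eqF.
  have t4 : t k.+1 <= t n by apply: tle; lia.
  rewrite (RI hal t2 t4) (RJ hal t1 t3) (Ra hal t1 t3).
  have [kn'|kn'] := ltnP k.+1 n.
    rewrite (Ra hal t2 (tlt _ _ kn')).
    set K := (Gamma_pos _)^-1; clearbody K.
    by field; rewrite ?al0 ?n1 ?n2' ?al1 ?al2.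
  have e : n = k.+1 by lia.
  subst n.
  rewrite (Ra_sing hal t2).
  set K := (Gamma_pos _)^-1; clearbody K.
  by field; rewrite ?al0 ?n1 ?n2' ?al1 ?al2.
- case: n n2 => [|[|m]] // _.
  rewrite /acoef /Jcoef /tau subn0 subn1 /=.
  have t1 : t m < t m.+1 by apply: tinc.
  have t2 : t m.+1 < t m.+2 by apply: tinc.
  have n1 : t m.+1 - t m != 0 by rewrite subr_eq0 gt_eqF.
  have n2' : t m.+2 - t m.+1 != 0 by rewrite subr_eq0 gt_eqF.
  rewrite (Ra_sing hal t2) (Ra hal t1 t2) (RJ hal t1 t2) omega1E //.
  set K := (Gamma_pos _)^-1; clearbody K.
  by field; rewrite ?al0 ?n1 ?n2' ?al1 ?al2.
Qed.
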